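(* For every $n\ge1$ and all $\Delta,\Delta'\in\mathcal{P}_n$: if for every $i\in\mathbb{Z}_n$ we have $d_\Delta(i)=d_{\Delta'}(i)\neq\mathbb{Z}_n$, then $\Delta\equiv\Delta'$.
   Context: Cells are indexed by $\mathbb{Z}_n=\{0,\dots,n-1\}$, indices modulo $n$. An update schedule is an ordered partition $\Delta=(\Delta_1,\dots,\Delta_k)$ of $\mathbb{Z}_n$ into nonempty blocks; $\mathcal{P}_n$ is the set of them. For $u,v\in\mathbb{Z}_n$ with $u\in\Delta_a$, $v\in\Delta_b$, $lab_\Delta((u,v))=\oplus$ if $b\le a$ and $\ominus$ if $a<b$. Define $d^{\leftarrow}_\Delta(i)=\max\{k\in\mathbb{N}:\forall j,\,0<j<k\Rightarrow lab_\Delta((i-j,i-j+1))=\ominus\}$, $d^{\rightarrow}_\Delta(i)=\max\{k\in\mathbb{N}:\forall j,\,0<j<k\Rightarrow lab_\Delta((i+j,i+j-1))=\ominus\}$, and $d_\Delta(i)=\{i-k \bmod n: 0\le k\le d^{\leftarrow}_\Delta(i)\}\cup\{i+k\bmod n:0\le k\le d^{\rightarrow}_\Delta(i)\}$. Two schedules are equivalent, $\Delta\equiv\Delta'$, iff $lab_\Delta$ and $lab_{\Delta'}$ agree on every arc $(i,i+1)$ and $(i+1,i)$, $i\in\mathbb{Z}_n$. *)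

(* Defs.v *)
From mathcomp Require Import all_boot.
Set Implicit Arguments. Unset Strict Implicit. Unset Printing Implicit Defensive.

(* Cells of Z_n are represented by 'I_n; a natural number k denotes the
   cell k mod n. *)

(* An update schedule is an ordered partition of Z_n into nonempty blocks,
   given as the sequence of its blocks (Delta_1, ..., Delta_k). *)
Definition is_schedule (n : nat) (D : seq {set 'I_n}) : Prop :=
  all (fun B => B != set0) D /\ (forall x : 'I_n, count (fun B : {set 'I_n} => x \in B) D = 1).

Definition blk (n : nat) (D : seq {set 'I_n}) (k : nat) : nat :=
  find (fun B : {set 'I_n} => [exists x in B, nat_of_ord x == k %% n]) D.

(* lab_D((u,v)) = (+) iff b <= a, where u in Delta_a, v in Delta_b;
   true encodes (+), false encodes (-). *)
Definition lab (n : nat) (D : seq {set 'I_n}) (u v : nat) : bool :=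
  blk D v <= blk D u.

Definition subm (n i j : nat) : nat := i + (n - j %% n).

(* k satisfies the defining condition of d^<-_D(i):
   forall j, 0 < j < k -> lab((i-j, i-j+1)) = (-). *)
Definition left_ok (n : nat) (D : seq {set 'I_n}) (i k : nat) : Prop :=
  forall j, 0 < j < k -> lab D (subm n i j) (subm n i j).+1 = false.

(* k satisfies the defining condition of d^->_D(i):
   forall j, 0 < j < k -> lab((i+j, i+j-1)) = (-). *)
Definition right_ok (n : nat) (D : seq {set 'I_n}) (i k : nat) : Prop :=
  forall j, 0 < j < k -> lab D (i + j) (i + j.-1) = false.

(* Membership in d_D(i) = {i-k : 0<=k<=d^<-(i)} u {i+k : 0<=k<=d^->(i)}.
   Since left_ok/right_ok are downward closed in k, "k <= max{k | ok k}"
   is the same as "ok k"; when the max does not exist (unbounded), this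
   gives the whole of Z_n. *)
Definition in_d (n : nat) (D : seq {set 'I_n}) (i x : 'I_n) : Prop :=
  (exists k, left_ok D i k /\ (x + k) %% n = i %% n) \/
  (exists k, right_ok D i k /\ x = (i + k) %% n :> nat).

Definition sched_equiv (n : nat) (D D' : seq {set 'I_n}) : Prop :=
  forall i : 'I_n, lab D i i.+1 = lab D' i i.+1 /\ lab D i.+1 i = lab D' i.+1 i.

(* Main.v *)
Require Import Defs.
From mathcomp Require Import all_boot zify.

Lemma blk_mod n (D : seq {set 'I_n}) k : blk D (k %% n) = blk D k.
Proof. by rewrite /blk modn_mod. Qed.

Lemma lab_eqm n (D : seq {set 'I_n}) u1 u2 v1 v2 :
  u1 = u2 %[mod n] -> v1 = v2 %[mod n] -> lab D u1 v1 = lab D u2 v2.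
Proof.
move=> Hu Hv; by rewrite /lab -(blk_mod _ D u1) -(blk_mod _ D v1) Hu Hv !blk_mod.
Qed.

Lemma mod_cases n m : 0 < n -> m < 2 * n ->
  (m < n /\ m %% n = m) \/ (n <= m /\ m %% n = m - n).
Proof.
move=> n0 lt; case: (ltnP m n) => h; [left; split=>//; exact: modn_small|right; split=>//].
rewrite -{1}(subnK h) modnDr modn_small //. lia.
Qed.

Lemma left_ok_le n (D : seq {set 'I_n}) i k k' :
  left_ok D i k -> k' <= k -> left_ok D i k'.
Proof. move=> H le j hj; apply: H; lia. Qed.

Lemma right_ok_le n (D : seq {set 'I_n}) i k k' :
  right_ok D i k -> k' <= k -> right_ok D i k'.
Proof. move=> H le j hj; apply: H; lia. Qed.

Lemma s3 n y p : 0 < n <= 3 -> y < n -> p < n ->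
  y = p \/ (y+1)%%n = p%%n \/ y = (p+1)%%n.
Proof. move=> h; have: n = 1 \/ n = 2 \/ n = 3 by lia. case=> [->|[->|->]]; lia. Qed.

Lemma small n (D : seq {set 'I_n}) (p y : 'I_n) : n <= 3 -> in_d D p y.
Proof.
move=> h. have yn := ltn_ord y; have pn := ltn_ord p.
have : 0 < n <= 3 by lia.
move=> H0; have := s3 _ _ _ H0 yn pn; move=> [E|[E|E]].
- left; exists 0; split; [move=> j; lia| by rewrite addn0 E].
- left; exists 1; split; [move=> j; lia| by []].
- right; exists 1; split; [move=> j; lia| by []].
Qed.

Lemma left_key n (D : seq {set 'I_n}) (p x : 'I_n) : 3 < n ->
  val x = (p + n - 2) %% n -> (exists y, ~ in_d D p y) ->
  (in_d D p x <-> lab D (p + n - 1) p = false).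
Proof.
move=> n4 hx [y0 hy0]. have pn := ltn_ord p. have n0 : 0 < n by lia.
have xn := ltn_ord x.
have hxv : (x:nat) = p + n - 2 /\ p + n - 2 < n \/ (x:nat) = p + n - 2 - n /\ n <= p + n - 2.
  have := mod_cases n (p + n - 2) n0 ltac:(lia); rewrite -hx; tauto.
have Elab : lab D (p + n - 1) p = lab D (subm n p 1) (subm n p 1).+1.
  rewrite /subm (modn_small (_ : 1 < n)); last lia.
  apply: lab_eqm; first by congr (_ %% _); lia.
  by rewrite (_ : (p + (n - 1)).+1 = p + n); [rewrite modnDr | lia].
split.
- case E: (lab D (p + n - 1) p) => //.
  case=> [[k [hk hxk]] | [k [hk hxk]]].
  + case: (ltnP 1 k) => hk1.
    * by move: (hk 1 (ltac:(lia))); rewrite -Elab E.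
    * rewrite (modn_small pn) in hxk.
      have := mod_cases n (x + k) n0 ltac:(lia). lia.
  + exfalso; apply: hy0.
    have hr := ltn_pmod k n0.
    have hxk' : (x:nat) = (p + k %% n) %% n by rewrite modnDmr.
    have := mod_cases n (p + k %% n) n0 ltac:(lia).
    move=> hc.
    have hkn : n - 2 <= k.
      have := leq_mod k n. lia.
    have hR := right_ok_le _ _ _ _ _ hk hkn.
    clear hk hxk hxk' hc hr hkn hxv hx Elab E.
    have yn := ltn_ord y0.
    case: (boolP ((y0.+1 == p) || (((p:nat) == 0) && ((y0:nat) == n - 1)))) => h.
    * left; exists 1; split; first by move=> j; lia.
      case/orP: h => [/eqP <-|/andP [/eqP hp /eqP hy]]; rewrite ?hp ?hy.
      -- by rewrite addn1.
      -- by rewrite subnK // modnn mod0n.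
    * right. case: (leqP p y0) => hpy.
      -- exists (y0 - p); split; first by apply: right_ok_le _ _ _ _ _ hR _; lia.
         by rewrite subnKC // modn_small.
      -- exists (y0 + n - p); split; first by apply: right_ok_le _ _ _ _ _ hR _; lia.
         rewrite (_ : p + (y0 + n - p) = y0 + n); last lia.
         by rewrite modnDr modn_small.
- move=> hlab. left; exists 2; split.
  + move=> j hj. have -> : j = 1 by lia. by rewrite -Elab.
  + rewrite hx modnDml (_ : p + n - 2 + 2 = p + n); last lia.
    by rewrite modnDr.
Qed.

Lemma right_key n (D : seq {set 'I_n}) (p x : 'I_n) : 3 < n ->
  val x = (p + 2) %% n -> (exists y, ~ in_d D p y) ->
  (in_d D p x <-> lab D p.+1 p = false).
Proof.
move=> n4 hx [y0 hy0]. have pn := ltn_ord p. have n0 : 0 < n by lia.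
have xn := ltn_ord x.
have hxv : (x:nat) = p + 2 /\ p + 2 < n \/ (x:nat) = p + 2 - n /\ n <= p + 2.
  have := mod_cases n (p + 2) n0 ltac:(lia); rewrite -hx; tauto.
split.
- case E: (lab D p.+1 p) => //.
  case=> [[k [hk hxk]] | [k [hk hxk]]].
  + exfalso; apply: hy0.
    have hr := ltn_pmod k n0.
    have hxk' : (x + k %% n) %% n = p by rewrite modnDmr hxk modn_small.
    have := mod_cases n (x + k %% n) n0 ltac:(lia).
    move=> hc.
    have hkn : n - 2 <= k.
      have := leq_mod k n. lia.
    have hL := left_ok_le _ _ _ _ _ hk hkn.
    clear hk hxk hxk' hc hr hkn hxv hx E.
    have yn := ltn_ord y0.
    case: (boolP (((y0:nat) == p.+1) || (((p:nat) == n - 1) && ((y0:nat) == 0)))) => h.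
    * right; exists 1; split; first by move=> j; lia.
      case/orP: h => [/eqP hy1|/andP [/eqP hp /eqP hy]]; rewrite ?hy1 ?hp ?hy.
      -- by rewrite addn1 modn_small //; lia.
      -- by rewrite subnK // modnn.
    * left. case: (leqP y0 p) => hpy.
      -- exists (p - y0); split; first by apply: left_ok_le _ _ _ _ _ hL _; lia.
         by rewrite subnKC.
      -- exists (p + n - y0); split; first by apply: left_ok_le _ _ _ _ _ hL _; lia.
         rewrite (_ : y0 + (p + n - y0) = p + n); last lia.
         by rewrite modnDr.
  + case: (ltnP 1 k) => hk1.
    * by move: (hk 1 (ltac:(lia))); rewrite /= addn0 addn1 E.
    * have := mod_cases n (p + k) n0 ltac:(lia). lia.
- move=> hlab. right; exists 2; split => //.
  move=> j hj. have -> : j = 1 by lia. by rewrite /= addn0 addn1.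
Qed.

Lemma bool_iff (a b : bool) (P Q : Prop) :
  (P <-> a = false) -> (Q <-> b = false) -> (P <-> Q) -> a = b.
Proof.
move=> h1 h2 h3; case: a h1; case: b h2 => // h2 h1;
  [have := proj1 h1 (proj2 h3 (proj2 h2 erefl)) | have := proj1 h2 (proj1 h3 (proj2 h1 erefl))]; done.
Qed.

Theorem mainTheorem11 (n : nat) (D D' : seq {set 'I_n}) :
  1 <= n -> is_schedule D -> is_schedule D' ->
  (forall i : 'I_n,
     (forall x : 'I_n, in_d D i x <-> in_d D' i x) /\
     (exists x : 'I_n, ~ in_d D i x)) ->
  sched_equiv D D'.
Proof.
move=> n1 _ _ H i.
have n4 : 3 < n.
  case: (H i) => _ [y hy]. rewrite ltnNge; apply/negP => h; apply: hy; exact: small.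
have n0 : 0 < n by lia.
have iN := ltn_ord i.
split.
- pose p := Ordinal (ltn_pmod i.+1 n0).
  case: (H p) => Hp [y hy].
  pose x := Ordinal (ltn_pmod (p + n - 2) n0).
  have hy' : ~ in_d D' p y by move=> /Hp.
  have L1 := @left_key n D p x n4 erefl (ex_intro _ y hy).
  have L2 := @left_key n D' p x n4 erefl (ex_intro _ y hy').
  have e : forall D0 : seq {set 'I_n}, lab D0 i i.+1 = lab D0 (p + n - 1) p.
    move=> D0; apply: lab_eqm; last by rewrite /= modn_mod.
    rewrite /=. case: (ltnP i.+1 n) => hi.
    + rewrite (modn_small hi) (_ : i.+1 + n - 1 = i + n); last lia.
      by rewrite modnDr.
    + have -> : i.+1 = n by lia.
      by rewrite modnn (_ : 0 + n - 1 = i) //; lia.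
  rewrite !e. exact: bool_iff _ _ _ _ L1 L2 (Hp x).
- case: (H i) => Hp [y hy].
  pose x := Ordinal (ltn_pmod (i + 2) n0).
  have hy' : ~ in_d D' i y by move=> /Hp.
  have L1 := @right_key n D i x n4 erefl (ex_intro _ y hy).
  have L2 := @right_key n D' i x n4 erefl (ex_intro _ y hy').
  exact: bool_iff _ _ _ _ L1 L2 (Hp x).
Qed.
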